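(* If $F_1$ and $F_2$ are forests with $X_{F_1}=X_{F_2}$, then $F_1$ and $F_2$ have the same number of leaves. That is, the number of leaves of a forest is determined by its chromatic symmetric function.
   Context: For a graph $G=(V,E)$ with $V=\{v_1,\dots,v_n\}$, a proper coloring is a map $\kappa:V\to\mathbb{N}$ with $\kappa(u)\ne\kappa(v)$ whenever $(u,v)\in E$. The chromatic symmetric function is $X_G=\sum_\kappa x_{\kappa(v_1)}\cdots x_{\kappa(v_n)}$, summed over proper colorings. A leaf is a vertex of degree exactly $1$. *)

(* Defs.v *)
From mathcomp Require Import all_boot.
Set Implicit Arguments. Unset Strict Implicit. Unset Printing Implicit Defensive.

Definition simple_graph (T : finType) (e : rel T) : Prop :=
  symmetric e /\ irreflexive e.

(* A forest: a simple graph with no cycle, i.e. every closed walk through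
   pairwise distinct vertices has at most 2 vertices (a "2-cycle" [x; y] is
   just a single edge traversed back and forth). *)
Definition forest (T : finType) (e : rel T) : Prop :=
  simple_graph e /\ forall c : seq T, uniq c -> cycle e c -> size c <= 2.

Definition degree (T : finType) (e : rel T) (v : T) : nat := #|[set u | e v u]|.
Definition leaves (T : finType) (e : rel T) : {set T} :=
  [set v | degree e v == 1].

Definition proper_coloring (T : finType) (e : rel T) (k : nat)
  (f : {ffun T -> 'I_k}) : bool :=
  [forall u, forall v, e u v ==> (f u != f v)].

(* Coefficient of the monomial x_0^(m 0) ... x_(k-1)^(m (k-1)) in the
   chromatic symmetric function X_G: the number of proper colourings whose
   colour class of i has size m i for every i.  (Any colouring with this
   content only uses colours < k, so restricting to 'I_k loses nothing.) *)
Definition csf_coef (T : finType) (e : rel T) (k : nat) (m : 'I_k -> nat) : nat :=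
  #|[set f : {ffun T -> 'I_k} | proper_coloring e f &
      [forall i, #|[set v | f v == i]| == m i]]|.

Definition same_csf (T1 T2 : finType) (e1 : rel T1) (e2 : rel T2) : Prop :=
  forall (k : nat) (m : 'I_k -> nat), csf_coef e1 m = csf_coef e2 m.

(* Main.v *)
Require Import Defs.
From mathcomp Require Import all_boot all_algebra.
Set Implicit Arguments. Unset Strict Implicit. Unset Printing Implicit Defensive.
Lemma card_part (T J : finType) (A : {set T}) (F : T -> J) :
  #|A| = \sum_(j : J) #|[set x in A | F x == j]|.
Proof.
rewrite -sum1_card (partition_big F predT) //=.
apply: eq_bigr => j _; rewrite -sum1_card; apply: eq_bigl => x.
by rewrite !inE.
Qed.
Lemma card_invol (T : finType) (s : T -> T) (A B : {set T}) :
  involutive s -> (forall x, x \in A -> s x \in B) ->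
  (forall x, x \in B -> s x \in A) -> #|A| = #|B|.
Proof.
move=> sK hA hB; apply/eqP; rewrite eqn_leq.
have sinj : injective s by apply: inv_inj.
apply/andP; split.
  rewrite -(card_imset A sinj); apply: subset_leq_card.
  by apply/subsetP => y /imsetP [x xA ->]; apply: hA.
rewrite -(card_imset B sinj); apply: subset_leq_card.
by apply/subsetP => y /imsetP [x xA ->]; apply: hB.
Qed.

Definition rm (T : finType) (e : rel T) u v : rel T :=
  fun x y => e x y && ~~ (((x == u) && (y == v)) || ((x == v) && (y == u))).

Lemma forest_sub (T : finType) (e e' : rel T) :
  forest e -> symmetric e' -> subrel e' e -> forest e'.
Proof.
move=> [[_ irr] cyc] sym sub; split; first split=> //.
  by move=> x; apply/negP => /sub; rewrite irr.
by move=> c uc /(sub_cycle sub); apply: cyc.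
Qed.

Lemma rm_sym (T : finType) (e : rel T) u v : symmetric e -> symmetric (rm e u v).
Proof.
move=> sym x y; rewrite /rm (sym x y); congr (_ && ~~ _); rewrite orbC; congr (_ || _); exact: andbC.
Qed.

Lemma rm_sub (T : finType) (e : rel T) u v : subrel (rm e u v) e.
Proof. by move=> x y /andP []. Qed.

Lemma bridge (T : finType) (e : rel T) u v :
  forest e -> e u v -> ~~ connect (rm e u v) u v.
Proof.
move=> [[sym irr] cyc] euv; apply/negP => /connectP [p pth lst].
case: (shortenP pth) lst => p' pth' uq _ lst.
have hc : cycle e (u :: p').
  rewrite /= rcons_path (sub_path (@rm_sub T e u v) pth') -lst sym euv.
  by [].
have := cyc _ uq hc; case: p' pth' uq hc lst => [|w [|w' p'']] //=.
  by move=> _ _ _ huv; rewrite huv irr in euv.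
move=> /andP [hw _] _ _ hv; move: hw; rewrite /rm -hv !eqxx.
by rewrite /= andbF.
Qed.

Definition sw k (a b c : 'I_k) : 'I_k := if c == a then b else if c == b then a else c.

Lemma swK k (a b : 'I_k) : involutive (sw a b).
Proof.
move=> c; rewrite /sw; case: (eqVneq c a) => [->|hca].
  by rewrite eqxx; case: (eqVneq b a).
case: (eqVneq c b) => [->|hcb]; first by rewrite eqxx.
by rewrite (negbTE hca) (negbTE hcb).
Qed.

Definition swc (T : finType) (e : rel T) u k (a b : 'I_k) (g : {ffun T -> 'I_k}) :
  {ffun T -> 'I_k} := [ffun x => if connect e u x then sw a b (g x) else g x].

Lemma swcK (T : finType) (e : rel T) u k (a b : 'I_k) : involutive (swc e u a b).
Proof.
move=> g; apply/ffunP => x; rewrite !ffunE; case: (connect e u x) => //; exact: swK.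
Qed.

Lemma swc_proper (T : finType) (e : rel T) u k (a b : 'I_k) g :
  symmetric e -> proper_coloring e g -> proper_coloring e (swc e u a b g).
Proof.
move=> sym /forallP h; apply/forallP => x; apply/forallP => y; apply/implyP => exy.
have := h x; move/forallP/(_ y)/implyP/(_ exy) => hxy.
rewrite !ffunE.
have cxy : connect e u x = connect e u y.
  apply/idP/idP => hc.
    by apply: connect_trans hc (connect1 exy).
  by apply: connect_trans hc (connect1 _); rewrite sym.
rewrite -cxy; case: ifP => // _.
by apply: contra hxy => /eqP /(inv_inj (swK a b)) ->.
Qed.

Lemma count_eq_uv (T : finType) (e : rel T) u v k :
  symmetric e -> ~~ connect e u v ->
  #|[set g : {ffun T -> 'I_k} | proper_coloring e g]| =
  k * #|[set g : {ffun T -> 'I_k} | proper_coloring e g & g u == g v]|.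
Proof.
move=> sym ncuv.
rewrite (card_part _ (fun g : {ffun T -> 'I_k} => g v)).
rewrite [X in _ * X](card_part _ (fun g : {ffun T -> 'I_k} => g v)).
rewrite big_distrr /=; apply: eq_bigr => b _.
rewrite (card_part _ (fun g : {ffun T -> 'I_k} => g u)).
rewrite -[X in X * _](card_ord k) -sum1_card big_distrl /=.
apply: eq_bigr => a _; rewrite mul1n.
apply: (card_invol (swcK e u a b)) => g; rewrite !inE.
- move=> /andP [/andP [hp hv] hu]; rewrite swc_proper //= !ffunE connect0.
  rewrite (negbTE ncuv) (eqP hu) /sw eqxx hv /=.
  by rewrite (eqP hv) eqxx.
- move=> /andP [/andP [hp hu] hv]; rewrite swc_proper //= !ffunE connect0.
  rewrite (negbTE ncuv) hv (eqP hu) (eqP hv) /sw eqxx /=.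
  by case: (eqVneq b a) => [->|].
Qed.

Definition Pc (T : finType) (e : rel T) k :=
  #|[set f : {ffun T -> 'I_k} | proper_coloring e f]|.
Definition dedges (T : finType) (e : rel T) := [set p : T * T | e p.1 p.2].

Lemma proper_rm (T : finType) (e : rel T) u v k (g : {ffun T -> 'I_k}) :
  e u v -> proper_coloring e g = proper_coloring (rm e u v) g && (g u != g v).
Proof.
move=> euv; apply/idP/idP.
  move=> /forallP h; apply/andP; split; last first.
    by move: (h u) => /forallP /(_ v) /implyP; apply.
  apply/forallP => x; apply/forallP => y; apply/implyP => /rm_sub hxy.
  by move: (h x) => /forallP /(_ y) /implyP; apply.
move=> /andP [/forallP h huv]; apply/forallP => x; apply/forallP => y.
apply/implyP => exy; case: (boolP (rm e u v x y)) => hr.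
  by move: (h x) => /forallP /(_ y) /implyP; apply.
move: hr; rewrite /rm exy /= negbK => /orP [] /andP [/eqP -> /eqP ->] //.
by rewrite eq_sym.
Qed.

Lemma key_rm (T : finType) (e : rel T) u v k :
  forest e -> e u v -> k * Pc e k = (k - 1) * Pc (rm e u v) k.
Proof.
move=> fe euv; have [[sym irr] _] := fe.
have hc := count_eq_uv k (rm_sym u v sym) (bridge fe euv).
have hs : Pc (rm e u v) k = Pc e k +
   #|[set g : {ffun T -> 'I_k} | proper_coloring (rm e u v) g & g u == g v]|.
  rewrite /Pc (card_part _ (fun g : {ffun T -> 'I_k} => g u == g v)) big_bool /= addnC.
  congr (_ + _); apply: eq_card => g; rewrite !inE ?(proper_rm _ euv) //.
  by case: (g u == g v); rewrite ?andbT ?andbF.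
  by case: (g u == g v); rewrite ?andbT ?andbF.
have hc' : k * #|[set g : {ffun T -> 'I_k} | proper_coloring (rm e u v) g & g u == g v]|
   = Pc (rm e u v) k by rewrite /Pc hc.
rewrite mulnBl mul1n {1}hs mulnDr hc'.
by rewrite addnK.
Qed.

Lemma dedges_rm (T : finType) (e : rel T) u v :
  irreflexive e -> e u v -> symmetric e ->
  #|dedges e| = (#|dedges (rm e u v)|).+2.
Proof.
move=> irr euv sym.
have huv : u != v by apply: contraTneq euv => ->; rewrite irr.
rewrite (cardsD1 (u, v)) (cardsD1 (v, u) (dedges e :\ (u, v))).
rewrite !inE /= euv sym euv xpair_eqE (negbTE huv) andbF /= !add1n.
congr (_.+2); apply: eq_card => -[x y]; rewrite !inE /= /rm !xpair_eqE.
by case: (e x y); case: (x == v); case: (y == u); case: (x == u); case: (y == v).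
Qed.

Lemma Pc_empty (T : finType) (e : rel T) k :
  dedges e = set0 -> Pc e k = k ^ #|T|.
Proof.
move=> h; have -> : k ^ #|T| = #|{ffun T -> 'I_k}| by rewrite card_ffun card_ord.
rewrite /Pc -cardsT; apply: eq_card => f.
rewrite !inE; apply/forallP => x; apply/forallP => y; apply/implyP => exy.
by have : (x, y) \in dedges e; [rewrite inE | rewrite h inE].
Qed.

Lemma forest_chrom (T : finType) k D : forall e : rel T,
  forest e -> #|dedges e| = D ->
  exists N, D = N.*2 /\ Pc e k * k ^ N = k ^ #|T| * (k - 1) ^ N.
Proof.
elim/ltn_ind: D => D IH e fe hD.
have [[sym irr] _] := fe.
case: (set_0Vmem (dedges e)) => [h0|[[u v] huv]].
  by exists 0; rewrite -hD h0 cards0 Pc_empty // !muln1.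
rewrite inE /= in huv.
have hD' := dedges_rm irr huv sym.
have fe' : forest (rm e u v) by apply: forest_sub fe (rm_sym _ _ sym) (@rm_sub _ _ _ _).
have [|N' [hN' heq]] := IH _ _ (rm e u v) fe' erefl.
  by rewrite -hD hD'.
exists N'.+1; split; first by rewrite -hD hD' hN' doubleS.
rewrite expnS mulnA (mulnC (Pc e k)) (key_rm k fe huv) -mulnA heq expnS.
by rewrite mulnCA mulnA.
Qed.

Definition del (T : finType) (e : rel T) v : rel T :=
  fun x y => e x y && (x != v) && (y != v).

Lemma del_sym (T : finType) (e : rel T) v : symmetric e -> symmetric (del e v).
Proof. by move=> sym x y; rewrite /del sym andbAC. Qed.

Lemma del_sub (T : finType) (e : rel T) v : subrel (del e v) e.
Proof. by move=> x y /andP [/andP []]. Qed.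

Lemma dedges_del (T : finType) (e : rel T) v :
  symmetric e -> irreflexive e ->
  #|dedges e| = #|dedges (del e v)| + (degree e v).*2.
Proof.
move=> sym irr.
rewrite -(cardsID [set p : T * T | p.1 == v]).
rewrite -(cardsID [set p : T * T | p.2 == v] (dedges e :\: _)).
have -> : dedges e :\: [set p : T * T | p.1 == v] :\: [set p | p.2 == v]
    = dedges (del e v).
  apply/setP => -[x y]; rewrite !inE /= /del.
  by case: (e x y); case: (x == v); case: (y == v).
have -> : dedges e :&: [set p : T * T | p.1 == v] = [set (v, u) | u in [set u | e v u]].
  apply/setP => -[x y]; rewrite !inE /=; apply/andP/imsetP => [[exy /eqP hx]|[u]].
    by exists y; [rewrite inE -hx | rewrite hx].
  by rewrite inE => evu [-> ->]; rewrite evu eqxx.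
have -> : (dedges e :\: [set p : T * T | p.1 == v]) :&: [set p : T * T | p.2 == v]
    = [set (u, v) | u in [set u | e v u]].
  apply/setP => -[x y]; rewrite !inE /=; apply/andP/imsetP => [[/andP [hx exy] /eqP hy]|[u]].
    by exists x; [rewrite inE sym -hy | rewrite hy].
  rewrite inE => evu [-> ->]; rewrite sym evu andbT; split=> //.
  by apply: contraTneq evu => ->; rewrite irr.
rewrite !card_imset; first by rewrite /degree -addnn addnA addnC.
  by move=> a b [].
by move=> a b [].
Qed.

Lemma inj_le (aT rT : finType) (f : aT -> rT) (A : {set aT}) (B : {set rT}) :
  {in A &, injective f} -> (forall x, x \in A -> f x \in B) -> #|A| <= #|B|.
Proof.
move=> inj hAB; rewrite -(card_in_imset inj); apply: subset_leq_card.
by apply/subsetP => y /imsetP [x xA ->]; apply: hAB.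
Qed.

Definition Av (T : finType) (e : rel T) v m :=
  #|[set f : {ffun T -> 'I_m.+2} | proper_coloring e f &
        [forall x, (f x == ord0) == (x == v)]]|.

Lemma Av_del (T : finType) (e : rel T) v m :
  symmetric e -> irreflexive e -> m.+1 * Av e v m = Pc (del e v) m.+1.
Proof.
move=> sym irr.
rewrite /Pc (card_part _ (fun h : {ffun T -> 'I_m.+1} => h v)).
rewrite -[X in X * _](card_ord m.+1) -sum1_card big_distrl /=.
apply: eq_bigr => c _; rewrite mul1n.
pose phi (f : {ffun T -> 'I_m.+2}) : {ffun T -> 'I_m.+1} :=
  [ffun x => if x == v then c else inord (f x).-1].
pose psi (h : {ffun T -> 'I_m.+1}) : {ffun T -> 'I_m.+2} :=
  [ffun x => if x == v then ord0 else lift ord0 (h x)].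
apply/eqP; rewrite eqn_leq; apply/andP; split.
  apply: (@inj_le _ _ phi).
    move=> f1 f2; rewrite !inE => /andP [_ /forallP h1] /andP [_ /forallP h2] heq.
    apply/ffunP => x; case: (eqVneq x v) => [->|hxv].
      by move: (h1 v) (h2 v); rewrite !eqxx !eqb_id => /eqP -> /eqP ->.
    have := congr1 (fun g : {ffun T -> 'I_m.+1} => val (g x)) heq.
    rewrite /phi !ffunE (negbTE hxv) /=.
    have n1 : f1 x != ord0 by move: (h1 x); rewrite (negbTE hxv) => /eqP ->.
    have n2 : f2 x != ord0 by move: (h2 x); rewrite (negbTE hxv) => /eqP ->.
    have lt1 : (f1 x).-1 < m.+2 by rewrite (leq_ltn_trans (leq_pred _)).
    have lt2 : (f2 x).-1 < m.+2 by rewrite (leq_ltn_trans (leq_pred _)).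
    rewrite !inordK; last 2 first.
    - by rewrite -ltnS prednK ?lt0n //; case: (f2 x).
    - by rewrite -ltnS prednK ?lt0n //; case: (f1 x).
    have p1 : 0 < f1 x by rewrite lt0n; apply: contra n1 => /eqP h; apply/eqP/val_inj.
    have p2 : 0 < f2 x by rewrite lt0n; apply: contra n2 => /eqP h; apply/eqP/val_inj.
    move=> hp; apply: val_inj => /=.
    by rewrite -(prednK p1) hp prednK.
  move=> f; rewrite !inE => /andP [/forallP hp /forallP h0].
  rewrite /phi ffunE !eqxx andbT.
  apply/forallP => x; apply/forallP => y; apply/implyP => /andP [/andP [exy hx] hy].
  rewrite !ffunE (negbTE hx) (negbTE hy).
  have n1 : f x != ord0 by move: (h0 x); rewrite (negbTE hx) => /eqP ->.
  have n2 : f y != ord0 by move: (h0 y); rewrite (negbTE hy) => /eqP ->.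
  move: (hp x) => /forallP /(_ y) /implyP /(_ exy).
  apply: contra => /eqP /(congr1 val) /=.
  rewrite !inordK; last 2 first.
  - by rewrite -ltnS prednK ?lt0n //; case: (f y).
  - by rewrite -ltnS prednK ?lt0n //; case: (f x).
  have p1 : 0 < f x by rewrite lt0n; apply: contra n1 => /eqP h; apply/eqP/val_inj.
  have p2 : 0 < f y by rewrite lt0n; apply: contra n2 => /eqP h; apply/eqP/val_inj.
  move=> hp'; apply/eqP/val_inj => /=.
  by rewrite -(prednK p1) hp' prednK.
apply: (@inj_le _ _ psi).
  move=> h1 h2; rewrite !inE => /andP [_ /eqP h1v] /andP [_ /eqP h2v] heq.
  apply/ffunP => x; case: (eqVneq x v) => [->|hxv]; first by rewrite h1v h2v.
  have := congr1 (fun g : {ffun T -> 'I_m.+2} => g x) heq.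
  by rewrite /psi !ffunE (negbTE hxv) => /lift_inj.
move=> h; rewrite !inE => /andP [/forallP hp _]; apply/andP; split.
  apply/forallP => x; apply/forallP => y; apply/implyP => exy.
  rewrite /psi !ffunE.
  case: (eqVneq x v) => [hxv|hxv]; case: (eqVneq y v) => [hyv|hyv] //=.
  - by move: exy; rewrite hxv hyv irr.
  apply: contra (_ : h x != h y) => [/eqP /lift_inj ->//|].
  by move: (hp x) => /forallP /(_ y) /implyP; apply; rewrite /del exy hxv hyv.
apply/forallP => x; rewrite /psi ffunE; case: (x == v) => //=.
Qed.

Definition cls (T : finType) k (f : {ffun T -> 'I_k}) : {ffun 'I_k -> nat} :=
  [ffun i => #|[set v | f v == i]|].

Definition cnt (T : finType) (e : rel T) k (Q : {ffun 'I_k -> nat} -> bool) :=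
  #|[set f : {ffun T -> 'I_k} | proper_coloring e f & Q (cls f)]|.

Lemma class_eq (T : finType) k (f : {ffun T -> 'I_k.+1}) v v0 :
  [forall x, (f x == ord0) == (x == v)] =
  (#|[set x | f x == ord0]| == 1) && (odflt v0 [pick x | f x == ord0] == v).
Proof.
apply/idP/idP.
  move/forallP => h.
  have hs : [set x | f x == ord0] = [set v].
    by apply/setP => x; rewrite !inE; move: (h x) => /eqP.
  rewrite hs cards1 /=; case: pickP => [x hx|hn].
    by have : x \in [set x | f x == ord0]; [rewrite inE | rewrite hs inE].
  by have : v \in [set x | f x == ord0]; [rewrite hs set11 | rewrite inE hn].
move=> /andP [/cards1P [w hw]]; case: pickP => [x hx|hn] /= /eqP hxv; last first.
  by have : w \in [set x | f x == ord0]; [rewrite hw set11 | rewrite inE hn].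
apply/forallP => y; apply/eqP.
have : x \in [set x | f x == ord0] by rewrite inE.
rewrite hw inE => /eqP hxw.
have := congr1 (fun S : {set T} => y \in S) hw; rewrite /= !inE => ->.
by rewrite -hxw hxv.
Qed.

Lemma A_sum (T : finType) (e : rel T) m :
  cnt e (fun c : {ffun 'I_m.+2 -> nat} => c ord0 == 1) = \sum_(v : T) Av e v m.
Proof.
case: (set_0Vmem [set: T]) => [h0|[v0 _]]; last first.
  rewrite /cnt (card_part _ (fun f : {ffun T -> 'I_m.+2} => odflt v0 [pick x | f x == ord0])).
  apply: eq_bigr => v _; apply: eq_card => f; rewrite !inE /cls ffunE.
  by rewrite (class_eq _ _ v0) andbA.
have hT : forall x : T, False.
  by move=> x; have : x \in [set: T]; [rewrite inE | rewrite h0 inE].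
have -> : \sum_(v : T) Av e v m = 0 by apply: big1 => v; case: (hT v).
apply/eqP; rewrite cards_eq0; apply/eqP/setP => f.
rewrite !inE /cls ffunE.
have -> : [set v | f v == ord0] = set0 by apply/setP => x; case: (hT x).
by rewrite cards0 andbF.
Qed.

Lemma Av_formula (T : finType) (e : rel T) v m :
  forest e ->
  (degree e v <= #|dedges e|./2) /\
  Av e v m * m.+1 ^ (#|dedges e|./2 - degree e v).+1 =
     m.+1 ^ #|T| * m ^ (#|dedges e|./2 - degree e v).
Proof.
move=> fe; have [[sym irr] _] := fe.
have [N [hN _]] := forest_chrom m.+1 fe erefl.
have fd : forest (del e v) by apply: forest_sub fe (del_sym _ sym) (@del_sub _ _ _).
have [Nv [hNv heq]] := forest_chrom m.+1 fd erefl.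
have hD := dedges_del v sym irr.
rewrite hN hNv -doubleD in hD; have {hD} hD := double_inj hD.
rewrite hN half_double hD addnK leq_addl; split=> //.
by rewrite expnS mulnA (mulnC _ m.+1) Av_del // heq subn1.
Qed.

Lemma cnt_sum (T : finType) (e : rel T) k n (Q : {ffun 'I_k -> nat} -> bool) :
  #|T| <= n ->
  cnt e Q = \sum_(m : {ffun 'I_k -> 'I_n.+1})
      (if Q [ffun i => val (m i)] then csf_coef e (fun i => val (m i)) else 0).
Proof.
move=> hn; rewrite /cnt (card_part _ (fun f => [ffun i => inord (cls f i) : 'I_n.+1])).
apply: eq_bigr => m _.
have clsE : forall f : {ffun T -> 'I_k},
   ([ffun i => inord (cls f i) : 'I_n.+1] == m) = (cls f == [ffun i => val (m i)]).
  move=> f; apply/eqP/eqP => [<-|->]; apply/ffunP => i; rewrite !ffunE.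
    rewrite /= inordK // ltnS (leq_trans _ hn) //; exact: max_card.
  exact: inord_val.
case: ifP => hQ.
  rewrite /csf_coef; apply: eq_card => f; rewrite !inE clsE.
  case: (proper_coloring e f) => //=.
  apply/andP/forallP => [[hq /eqP hc] i|h].
    have := congr1 (fun g : {ffun 'I_k -> nat} => g i) hc.
    by rewrite /= !ffunE => ->.
  have hc : cls f == [ffun i => val (m i)].
    by apply/eqP/ffunP => i; rewrite !ffunE; apply/eqP; apply: h.
  by rewrite (eqP hc) hQ.
apply/eqP; rewrite cards_eq0; apply/eqP/setP => f; rewrite !inE clsE.
apply/negbTE; apply/negP => /andP [/andP [_ hq] /eqP hc].
by rewrite hc hQ in hq.
Qed.

Lemma coef_ones_card (T : finType) (e : rel T) k :
  0 < csf_coef e (fun _ : 'I_k => 1) -> #|T| = k.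
Proof.
rewrite /csf_coef card_gt0 => /set0Pn [f]; rewrite inE => /andP [_ /forallP h].
rewrite -cardsT (card_part _ f).
rewrite (eq_bigr (fun _ => 1)); first by rewrite sum1_card card_ord.
move=> i _; rewrite -(eqP (h i)); apply: eq_card => x; by rewrite !inE.
Qed.

Lemma coef_ones_pos (T : finType) (e : rel T) :
  irreflexive e -> 0 < csf_coef e (fun _ : 'I_#|T| => 1).
Proof.
move=> irr; rewrite /csf_coef card_gt0; apply/set0Pn.
exists [ffun v => enum_rank v]; rewrite inE; apply/andP; split.
  apply/forallP => u; apply/forallP => v; apply/implyP => huv.
  rewrite !ffunE; apply/negP => /eqP /enum_rank_inj huv'.
  by rewrite huv' irr in huv.
apply/forallP => i; rewrite -(card1 (enum_val i)); apply/eqP; apply: eq_card => x.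
rewrite !inE ffunE; apply/eqP/eqP => [<-|->]; first by rewrite enum_rankK.
by rewrite enum_valK.
Qed.

Section PolyPart.
Import GRing.Theory Num.Theory.
Local Open Scope ring_scope.

Definition tpoly N d : {poly int} := 'X^d * ('X - 1%:P) ^+ (N - d).

Definition ppoly (T : finType) (d : T -> nat) N : {poly int} :=
  \sum_(v : T) tpoly N (d v).

Lemma ppoly_eval (T : finType) (d : T -> nat) N k : (0 < k)%N ->
  (ppoly d N).[k%:R] = (\sum_(v : T) k ^ d v * (k - 1) ^ (N - d v))%:R.
Proof.
move=> k0; rewrite horner_sum natr_sum; apply: eq_bigr => v _.
by rewrite /tpoly hornerM hornerXn horner_exp hornerXsubC natrM !natrX natrB.
Qed.

Lemma tpoly0 N d : (tpoly N d).[0] = (d == 0)%:R * (-1) ^+ N.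
Proof.
rewrite /tpoly hornerM hornerXn horner_exp hornerXsubC expr0n sub0r.
by case: d => [|d] /=; rewrite ?subn0 // !mul0r.
Qed.

Lemma tpoly1 N d : (d <= N)%N ->
  ((tpoly N d)^`()).[0] = ((d == 1)%:R + (d == 0)%:R * N%:R) * (-1) ^+ N.-1.
Proof.
move=> dN; rewrite /tpoly derivM derivXn deriv_exp derivXsubC mul1r.
rewrite hornerD !hornerM hornerMn hornerXn hornerMn horner_exp hornerXsubC hornerXn.
rewrite horner_exp hornerXsubC sub0r.
case: d dN => [|[|d]] dN /=.
- by rewrite subn0 expr0 mulr0n mul0r add0r mul1r !add0r mul1r mulr_natl.
- by rewrite expr0 mulr1n !mul1r expr1 !mul0r addr0 subn1 mul1r.
- by rewrite !exprS !mul0r mul0rn !mul0r addr0.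
Qed.

Lemma card_sumr (T : finType) (P : pred T) (c : int) :
  \sum_(v : T) (P v)%:R * c = (#|[set v | P v]|)%:R * c.
Proof.
rewrite -mulr_suml -natr_sum; congr (_%:R * _).
rewrite -sum1_card [RHS]big_mkcond /=; apply: eq_bigr => v _; rewrite inE.
by case: (P v).
Qed.

Lemma extract (T1 T2 : finType) (d1 : T1 -> nat) (d2 : T2 -> nat) N :
  (forall v, d1 v <= N)%N -> (forall v, d2 v <= N)%N ->
  (forall k, 0 < k -> \sum_v k ^ d1 v * (k - 1) ^ (N - d1 v) =
                      \sum_v k ^ d2 v * (k - 1) ^ (N - d2 v))%N ->
  #|[set v | d1 v == 1%N]| = #|[set v | d2 v == 1%N]|.
Proof.
move=> hd1 hd2 hS.
have hp : ppoly d1 N = ppoly d2 N.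
  apply/eqP; rewrite -subr_eq0; apply/negPn/negP => hq.
  set q := ppoly d1 N - ppoly d2 N in hq.
  have H1 : all (root q) [seq (i.+1)%:R | i <- iota 0 (size q)].
    apply/allP => x /mapP [i _ ->]; rewrite rootE /q hornerD hornerN !ppoly_eval //.
    by rewrite hS // subrr.
  have H2 : uniq [seq (i.+1)%:R : int | i <- iota 0 (size q)].
    rewrite map_inj_uniq ?iota_uniq // => a b /eqP; rewrite eqr_nat => /eqP [].
    by [].
  have := max_poly_roots hq H1 H2.
  by rewrite size_map size_iota ltnn.
have n0 : #|[set v | d1 v == 0%N]| = #|[set v | d2 v == 0%N]|.
  have := congr1 (fun p => p.[0]) hp; rewrite /ppoly !horner_sum.
  under eq_bigr do rewrite tpoly0.
  under [in RHS]eq_bigr do rewrite tpoly0.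
  rewrite !card_sumr => /mulIf; rewrite signr_eq0 => /(_ isT) /eqP.
  by rewrite eqr_nat => /eqP.
have := congr1 (fun p => (p^`()).[0]) hp; rewrite /ppoly !raddf_sum /= !horner_sum.
under eq_bigr do rewrite tpoly1 // mulrDl.
under [in RHS]eq_bigr do rewrite tpoly1 // mulrDl.
rewrite !big_split /= !card_sumr.
under eq_bigr do rewrite -mulrA.
under [in RHS]eq_bigr do rewrite -mulrA.
rewrite !card_sumr n0 => /addIr /mulIf; rewrite signr_eq0 => /(_ isT) /eqP.
by rewrite eqr_nat => /eqP.
Qed.

End PolyPart.

Lemma Pc_cnt (T : finType) (e : rel T) k : Pc e k = cnt e (fun _ : {ffun 'I_k -> nat} => true).
Proof. by apply: eq_card => f; rewrite !inE andbT. Qed.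

Lemma P_formula (T : finType) (e : rel T) k : forest e ->
  Pc e k * k ^ (#|dedges e|./2) = k ^ #|T| * (k - 1) ^ (#|dedges e|./2).
Proof.
move=> fe; have [N [hN heq]] := forest_chrom k fe erefl.
by rewrite hN half_double.
Qed.

Lemma A_formula (T : finType) (e : rel T) m : forest e ->
  cnt e (fun c : {ffun 'I_m.+2 -> nat} => c ord0 == 1) * m.+1 ^ (#|dedges e|./2).+1 =
  m.+1 ^ #|T| * \sum_(v : T) m.+1 ^ degree e v * m ^ (#|dedges e|./2 - degree e v).
Proof.
move=> fe; rewrite A_sum big_distrl big_distrr /=; apply: eq_bigr => v _.
have [hd hf] := Av_formula v m fe.
have -> : (#|dedges e|./2).+1 = (#|dedges e|./2 - degree e v).+1 + degree e v.
  by rewrite addSn subnK.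
rewrite expnD mulnA hf -mulnA; congr (_ * _); exact: mulnC.
Qed.

Theorem mainTheorem6 (T1 T2 : finType) (e1 : rel T1) (e2 : rel T2) :
  forest e1 -> forest e2 -> same_csf e1 e2 ->
  #|leaves e1| = #|leaves e2|.
Proof.
move=> f1 f2 hs.
have [[sym1 irr1] _] := f1; have [[sym2 irr2] _] := f2.
have hn : #|T2| = #|T1|.
  by apply: (coef_ones_card (e := e2)); rewrite -hs; apply: coef_ones_pos.
have hcnt : forall k (Q : {ffun 'I_k -> nat} -> bool), cnt e1 Q = cnt e2 Q.
  move=> k Q; rewrite (cnt_sum e1 Q (leqnn #|T1|)) (@cnt_sum _ e2 _ #|T1| Q); last by rewrite hn.
  by apply: eq_bigr => m _; rewrite hs.
have hP : forall k, Pc e1 k = Pc e2 k by move=> k; rewrite !Pc_cnt hcnt.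
have hN : #|dedges e1|./2 = #|dedges e2|./2.
  have h1 := P_formula 2 f1; have h2 := P_formula 2 f2.
  rewrite hP /= !exp1n !muln1 in h1; rewrite hn /= !exp1n !muln1 in h2.
  have p0 : 0 < Pc e2 2.
    by rewrite lt0n; apply/eqP => h0; move: h2; rewrite h0 mul0n => /esym/eqP; rewrite expn_eq0.
  rewrite -h2 in h1.
  by move: h1 => /eqP; rewrite eqn_pmul2l // eqn_exp2l // => /eqP.
rewrite /leaves.
apply: (@extract _ _ (degree e1) (degree e2) (#|dedges e1|./2)).
- by move=> v; have [] := Av_formula v 0 f1.
- by move=> v; rewrite hN; have [] := Av_formula v 0 f2.
case=> // m _; rewrite subn1 /=.
have h1 := A_formula m f1; have h2 := A_formula m f2.
rewrite hcnt hN h2 hn in h1.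
by move/eqP: h1; rewrite eqn_pmul2l ?expn_gt0 // hN => /eqP.
Qed.
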